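(* Let $U$ be a set with a total order $\preceq$, let $k>1$, and let $\mathcal P$ be a $k$-pattern in $U$ that admits at most one reconstruction from $\preceq$-consecutive points. Let $n$ be a positive integer, $r$ the remainder when $n$ is divided by $k-1$, $V$ an $n$-element subset of $U$, and $(V_1\prec\cdots\prec V_{k-1})$ a $\preceq$-orderly, balanced $(k-1)$-decomposition of $V$. Then $S_{\mathcal P}(V)=(n-r)(n+r-k+1)/(2k-2)$ if and only if for every $j\in\{1,\dots,k-1\}$ and every pair of points $v\prec w$ in $V_j$, there exists a reconstruction $P$ of $\mathcal P$ with $v$ and $w$ as its $j$th and $(j+1)$th points, and this $P$ is a subset of $V$ that is not of echelon $i$ in the decomposition for any $i\neq j$.
   Context: A pattern in $U$ is a collection $\mathcal P$ of finite subsets of $U$; it is a $k$-pattern if every instance has exactly $k$ elements. $S_{\mathcal P}(V)=|\{P\subseteq V:P\in\mathcal P\}|$. The $i$th point of a finite set w.r.t. $\preceq$ is the element with exactly $i-1$ elements of the set below it. For $j\in\{1,\dots,k-1\}$ and $u\prec v$, a reconstruction of $\mathcal P$ with $u,v$ as $j$th and $(j+1)$th points is an instance $P\in\mathcal P$ whose $j$th and $(j+1)$th points are $u,v$; $\mathcal P$ admits at most one reconstruction from $\preceq$-consecutive points if there is at most one such reconstruction for all such $j,u,v$. For $A,B\subseteq U$, $A\prec B$ means $a\prec b$ for all $a\in A,b\in B$. An $\ell$-decomposition of $V$ is a family $(V_1,\dots,V_\ell)$ of pairwise disjoint, possibly empty subsets with union $V$; it is $\preceq$-orderly if any two distinct members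 are $\prec$-comparable as sets (indexed so $V_1\prec\cdots\prec V_\ell$), and balanced if each $V_i$ has $\lfloor n/\ell\rfloor$ or $\lceil n/\ell\rceil$ elements. A $k$-subset $P=\{p_1\prec\cdots\prec p_k\}$ is of echelon $j$ in $(V_1\prec\cdots\prec V_{k-1})$ if $p_j,p_{j+1}\in V_j$. *)

(* Defs.v *)
From HB Require Import structures.
From mathcomp Require Import all_boot all_order all_algebra.
Set Implicit Arguments. Unset Strict Implicit. Unset Printing Implicit Defensive.
Import Order.TTheory GRing.Theory Num.Theory.

Local Open Scope order_scope.

Section Patterns.
Variables (disp : Order.disp_t) (U : orderType disp).

(* A finite subset of U is represented by the strictly increasing list of its
   elements (unique representation).  A pattern is a (boolean) collection of
   finite subsets, i.e. a predicate P on lists; only strictly sorted lists are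
   regarded as (finite sets that may be) instances. *)
Definition fset_rep (s : seq U) : bool := sorted <%O s.

Definition instance (P : pred (seq U)) (s : seq U) : bool := fset_rep s && P s.

Definition k_pattern (k : nat) (P : pred (seq U)) : Prop :=
  forall s, instance P s -> size s = k.

(* The i-th point of the finite set s (1-indexed in the paper) is
   onth s (i-1); we index points from 0 here: [point s i x] means that x is
   the (i+1)-th point of s. *)
Definition point (s : seq U) (i : nat) (x : U) : Prop := onth s i = Some x.

(* Reconstruction of P with u,v as j-th and (j+1)-th points; here j0 = j-1. *)
Definition reconstruction (P : pred (seq U)) (j0 : nat) (u v : U) (s : seq U)
  : Prop := instance P s /\ point s j0 u /\ point s j0.+1 v.

Definition at_most_one_reconstruction (k : nat) (P : pred (seq U)) : Prop :=
  forall (j0 : nat) (u v : U), j0 < k.-1 -> u < v ->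
    forall s t, reconstruction P j0 u v s -> reconstruction P j0 u v t -> s = t.

(* S_P(V): number of subsets of V (V strictly sorted) that are instances of P;
   subsets of V correspond bijectively to masks of V. *)
Definition S_P (P : pred (seq U)) (V : seq U) : nat :=
  \sum_(m : (size V).-tuple bool) instance P (mask m V).

Definition decomposition (l : nat) (V : seq U) (Vs : 'I_l -> seq U) : Prop :=
  (forall i, fset_rep (Vs i)) /\
  (forall i j : 'I_l, i != j -> forall x, x \in Vs i -> x \notin Vs j) /\
  (forall x, x \in V <-> exists i, x \in Vs i).

Definition orderly (l : nat) (Vs : 'I_l -> seq U) : Prop :=
  forall i j : 'I_l, (i < j)%N -> forall a b, a \in Vs i -> b \in Vs j -> a < b.

Definition balanced (l : nat) (n : nat) (Vs : 'I_l -> seq U) : Prop :=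
  forall i, size (Vs i) = (n %/ l)%N \/ size (Vs i) = ((n + l.-1) %/ l)%N.

(* s (a k-set p_1 < ... < p_k) is of echelon i (1-indexed i = i0+1) *)
Definition echelon (l : nat) (Vs : 'I_l -> seq U) (s : seq U) (i : 'I_l) : Prop :=
  exists x y, point s i x /\ point s i.+1 y /\ x \in Vs i /\ y \in Vs i.

End Patterns.

(* Main.v *)
Require Import Defs.
From HB Require Import structures.
From mathcomp Require Import all_boot all_order all_algebra.
From mathcomp Require Import zify ring.
Import Order.TTheory GRing.Theory Num.Theory.

Lemma sum_single (T : eqType) (l : seq T) x (F : T -> nat) :
  uniq l -> (forall v, v != x -> F v = 0) ->
  \sum_(v <- l) F v = (x \in l) * F x.
Proof.
move=> ul H; elim: l ul => [|a l IH] /=; first by rewrite big_nil.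
case/andP=> al ul; rewrite big_cons IH // in_cons.
case: (eqVneq x a) => [->|xa] /=.
  rewrite (negPf al) mul0n addn0 /=. by rewrite mul1n.
by rewrite H ?add0n // eq_sym.
Qed.

Lemma mask_inj (T : eqType) (V : seq T) m1 m2 : uniq V ->
  size m1 = size V -> size m2 = size V -> mask m1 V = mask m2 V -> m1 = m2.
Proof.
elim: V m1 m2 => [|a V IH] [|b1 m1] [|b2 m2] //= /andP[aV uV] [s1] [s2].
case: b1; case: b2 => E.
- by case: E => E; congr cons; apply: IH.
- have: a \in mask m2 V by rewrite -E mem_head.
  by move/mem_mask; rewrite (negPf aV).
- have: a \in mask m1 V by rewrite E mem_head.
  by move/mem_mask; rewrite (negPf aV).
- by congr cons; apply: IH.
Qed.

Lemma ltn_sum_seq (I : eqType) (r : seq I) (F G : I -> nat) i0 :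
  uniq r -> i0 \in r -> (forall i, i \in r -> F i <= G i) -> F i0 < G i0 ->
  \sum_(i <- r) F i < \sum_(i <- r) G i.
Proof.
move=> ur ir H lt0.
rewrite (bigD1_seq i0) //= [X in _ < X](bigD1_seq i0) //=.
apply: (@leq_trans (G i0 + \sum_(i <- r | i != i0) F i)).
  by rewrite ltn_add2r.
rewrite leq_add2l big_seq_cond [X in _ <= X]big_seq_cond.
by apply: leq_sum => i /andP[ii _]; apply: H.
Qed.

Lemma sum_le1 (T : finType) (f : T -> bool) :
  (forall a b, f a -> f b -> a = b) -> \sum_a f a <= 1.
Proof.
move=> H; case: (pickP f) => [a fa|nf]; last by rewrite big1 // => a _; rewrite nf.
rewrite (bigD1 a) //= fa big1 // => b ba.
case E: (f b) => //; by rewrite (H _ _ E fa) eqxx in ba.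
Qed.

Lemma onth_nthE (T : Type) (x0 : T) (s : seq T) t :
  t < size s -> onth s t = Some (nth x0 s t).
Proof. by elim: s t => [|a s IH] [|t] //= lt; apply: IH. Qed.

Lemma bin2_dbl q : 2 * 'C(q, 2) = q * q.-1.
Proof.
elim: q => [|q IH] //; rewrite binS bin1 mulnDr IH.
case: q {IH} => [|q] //=; lia.
Qed.

Section Ord.
Context {disp : Order.disp_t} {U : orderType disp}.

Lemma onth_lt (s : seq U) t x y : sorted <%O s ->
  onth s t = Some x -> onth s t.+1 = Some y -> (x < y)%O.
Proof.
elim: s t => [|a s IH] [|t] //=.
- case: s IH => [|b s] IH //= /andP[ab _] [<-] [<-] //.
- move=> ss; apply: IH; exact: (path_sorted ss).
Qed.

Lemma subset_mask (s V : seq U) : sorted <%O s -> sorted <%O V ->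
  {subset s <= V} -> exists msk : (size V).-tuple bool, s = mask msk V.
Proof.
move=> ss sV sub.
have sq : subseq s V.
  have -> : s = filter (mem s) V.
    apply: (irr_sorted_eq (leT := <%O)) => //; first exact: lt_trans.
    - by apply: sorted_filter => //; exact: lt_trans.
    move=> x; rewrite mem_filter; apply/idP/andP => [xs|[] //]; split => //; exact: sub.
  exact: filter_subseq.
case/subseqP: sq => m sz ->.
have szb : size m == size V by apply/eqP.
by exists (Tuple szb).
Qed.

Lemma pairs_sorted (s : seq U) : sorted <%O s ->
  \sum_(v <- s) \sum_(w <- s) ((v < w)%O : nat) = 'C(size s, 2).
Proof.
elim: s => [|a s IH] /=; first by rewrite big_nil.
move=> ps; have ss := path_sorted ps.
have alls : all (fun w => (a < w)%O) s.
  by apply: (order_path_min (@lt_trans _ _)).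
rewrite big_cons big_cons ltxx add0n.
have -> : \sum_(j <- s) ((a < j)%O : nat) = size s.
  elim: s alls {IH ps ss} => [|b s IH'] /=; first by rewrite big_nil.
  by case/andP=> ab al; rewrite big_cons ab IH'.
rewrite binS bin1 addnC; congr (_ + _).
rewrite -IH //; apply: eq_big_seq => v vs.
rewrite big_cons.
have : (a < v)%O by move/allP: alls; apply.
by move=> av; rewrite (lt_gtF av) add0n.
Qed.

End Ord.

Theorem mainTheorem4 (disp : Order.disp_t) (U : orderType disp) (k : nat)
  (P : pred (seq U)) :
  (1 < k)%N ->
  k_pattern k P ->
  at_most_one_reconstruction k P ->
  forall (n : nat) (V : seq U) (Vs : 'I_k.-1 -> seq U),
    (0 < n)%N ->
    fset_rep V -> size V = n ->
    decomposition V Vs -> orderly Vs -> balanced n Vs ->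
    let r := (n %% k.-1)%N in
    ((S_P P V)%:Q = ((n%:Q - r%:Q) * (n%:Q + r%:Q - k%:Q + 1)) / (2 * k%:Q - 2))%R
    <->
    (forall (j : 'I_k.-1) (v w : U), v \in Vs j -> w \in Vs j -> (v < w)%O ->
       exists s, reconstruction P j v w s /\ {subset s <= V} /\
         (forall i : 'I_k.-1, i != j -> ~ echelon Vs s i)).
Proof.
move=> k1 kpat amo n V Vs n0 sV szV [sVs [disj cover]] ord bal r.
pose m := k.-1.
have km : k = m.+1 by rewrite /m prednK // ltnW.
have m0 : 0 < m by rewrite /m; lia.
have uVs : forall j, uniq (Vs j) := fun j => lt_sorted_uniq (sVs j).
have uV := lt_sorted_uniq sV.
pose inst := fun msk : (size V).-tuple bool => instance P (mask msk V).
pose relb := fun (s : seq U) (j : nat) (v w : U) =>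
  [&& (v < w)%O, onth s j == Some v & onth s j.+1 == Some w].
pose echb := fun (s : seq U) (j : 'I_m) =>
  match onth s j, onth s j.+1 with
  | Some x, Some y => [&& (x < y)%O, x \in Vs j & y \in Vs j]
  | _, _ => false end.
pose term := fun (j : 'I_m) v w =>
  \sum_(msk : (size V).-tuple bool) (inst msk && relb (mask msk V) j v w).
pose inner := fun msk : (size V).-tuple bool =>
  \sum_(j < m) \sum_(v <- Vs j) \sum_(w <- Vs j) (inst msk && relb (mask msk V) j v w).
pose tri := \sum_(j < m) \sum_(v <- Vs j) \sum_(w <- Vs j) ((v < w)%O : nat).
pose R := \sum_(j < m) \sum_(v <- Vs j) \sum_(w <- Vs j) term j v w.
have F1 : R = \sum_(msk : (size V).-tuple bool) inner msk.
  rewrite /R /inner /term; symmetry; rewrite exchange_big /=.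
  apply: eq_bigr => j _; rewrite exchange_big; apply: eq_bigr => v _.
  by rewrite exchange_big.
have F2 : forall msk, inner msk = inst msk * \sum_(j < m) echb (mask msk V) j.
  move=> msk; rewrite /inner big_distrr /=; apply: eq_bigr => j _.
  rewrite /echb.
  case Ex: (onth (mask msk V) j) => [x|]; last first.
    by rewrite muln0 big1 // => v _; rewrite big1 // => w _; rewrite /relb Ex /= ?andbF.
  case Ey: (onth (mask msk V) j.+1) => [y|]; last first.
    by rewrite muln0 big1 // => v _; rewrite big1 // => w _; rewrite /relb Ey /= ?andbF.
  rewrite (@sum_single _ _ x _ (uVs j)); last first.
    move=> v vx; apply: big1 => w _; rewrite /relb Ex.
    by rewrite (inj_eq (@Some_inj _)) eq_sym (negPf vx) /= !andbF.
  rewrite (@sum_single _ _ y _ (uVs j)); last first.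
    move=> w wy; rewrite /relb Ex Ey.
    by rewrite [Some y == _](inj_eq (@Some_inj _)) eq_sym (negPf wy) /= !andbF.
  rewrite /relb Ex Ey /= !eqxx.
  by case: (inst msk); case: (x < y)%O; case: (x \in Vs j); case: (y \in Vs j).
have F3 : forall msk, inst msk -> exists j, echb (mask msk V) j.
  move=> msk im; pose s := mask msk V.
  have ss : sorted <%O s by case/andP: im.
  have szs : size s = k by apply: kpat.
  have sV' : {subset s <= V} by move=> x /mem_mask.
  apply/existsP; apply: contraT; rewrite negb_exists => /forallP Hn.
  pose blk := fun x : U => if [pick i : 'I_m | x \in Vs i] is Some i then val i else 0.
  have blkE : forall (i : 'I_m) x, x \in Vs i -> blk x = i.
    move=> i x xi; rewrite /blk; case: pickP => [j xj|nf]; last by rewrite nf in xi.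
    case: (eqVneq i j) => [->//|ij].
    by rewrite (negPf (disj _ _ ij _ xi)) in xj.
  have [x0 _] : exists x : U, True.
    move: szs; case: (s) => [|a ?] /=; last by exists a.
    move=> E; lia.
  pose b := fun t => blk (nth x0 s t).
  have bin : forall t, t < k -> exists i : 'I_m, nth x0 s t \in Vs i /\ b t = i.
    move=> t tk.
    have : nth x0 s t \in V by apply: sV'; apply: mem_nth; rewrite szs.
    move/cover=> [i xi]; exists i; split => //; exact: blkE.
  have blt : forall t, t < k -> b t < m.
    by move=> t tk; have [i [_ ->]] := bin t tk.
  have slt : forall t, t.+1 < k -> (nth x0 s t < nth x0 s t.+1)%O.
    move=> t tk; apply: (sorted_ltn_nth (@lt_trans _ U)) => //;
      by rewrite inE szs //; apply: ltnW.
  have bmono : forall t, t.+1 < k -> b t <= b t.+1.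
    move=> t lt; have [i [xi bi]] := bin t (ltnW lt); have [j [yj bj]] := bin t.+1 lt.
    rewrite bi bj leqNgt; apply/negP => ji.
    have h1 := ord j i ji _ _ yj xi; have h2 := slt t lt.
    by move: (lt_trans h1 h2); rewrite ltxx.
  have claim : forall t, t <= m -> t <= b t.
    elim => [|t IH] lt //.
    have IH' := IH (ltnW lt).
    have lt2 : t.+1 < k by rewrite km.
    have mono := bmono t lt2.
    rewrite ltn_neqAle (leq_trans IH' mono) andbT.
    apply/eqP => E.
    have tm : t < m by lia.
    have bt : b t = t by lia.
    have [i [xi bi]] := bin t (ltnW lt2); have [j [yj bj]] := bin t.+1 lt2.
    have ei : i = Ordinal tm by apply: val_inj; rewrite /= -bi bt.
    have ej : j = Ordinal tm by apply: val_inj; rewrite /= -bj -E.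
    have o1 : onth s t = Some (nth x0 s t) by rewrite (@onth_nthE _ x0) // szs; lia.
    have o2 : onth s t.+1 = Some (nth x0 s t.+1) by rewrite (@onth_nthE _ x0) // szs; lia.
    move: (Hn (Ordinal tm)); rewrite /echb [nat_of_ord (Ordinal tm)]/= o1 o2.
    by rewrite -{1}ei xi -ej yj slt ?km.
  have mk : m < k by rewrite km.
  have h1 := claim m (leqnn m); have h2 := blt m mk; lia.
have F4 : forall j v w, term j v w <= ((v < w)%O : nat).
  move=> j v w; case vw: (v < w)%O; last first.
    by rewrite /term big1 // => msk _; rewrite /relb vw /= andbF.
  have H : forall a b : (size V).-tuple bool,
      inst a && relb (mask a V) j v w -> inst b && relb (mask b V) j v w -> a = b.
    move=> a b /andP[ia /and3P[_ /eqP pa /eqP qa]] /andP[ib /and3P[_ /eqP pb /eqP qb]].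
    have E : mask a V = mask b V.
      by apply: (amo j v w (ltn_ord j) vw); split => //; split.
    apply: val_inj; apply: (@mask_inj _ V _ _ uV) => //; by rewrite size_tuple.
  by apply: leq_trans (@sum_le1 _ (fun msk => inst msk && relb (mask msk V) j v w) H) _.
have Fins : forall msk, inst msk <= inner msk.
  move=> msk; rewrite F2; case im: (inst msk) => //; rewrite mul1n.
  have [j ej] := F3 msk im.
  by rewrite (bigD1 j) //= ej.
have SleR : S_P P V <= R.
  rewrite F1; apply: leq_sum => msk _; exact: Fins.
have Rle : R <= tri.
  apply: leq_sum => j _; apply: leq_sum => v _; apply: leq_sum => w _; exact: F4.
pose q := n %/ m.
have hr : r = n %% m by [].
have pairs : forall j, \sum_(v <- Vs j) \sum_(w <- Vs j) ((v < w)%O : nat)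
    = 'C(size (Vs j), 2) := fun j => pairs_sorted _ (sVs j).
have sizesum : \sum_(j < m) size (Vs j) = n.
  have e1 : forall j, size (Vs j) = \sum_(x <- V) (x \in Vs j).
    move=> j; transitivity (count (mem (Vs j)) V); last first.
      by rewrite -sum1_count big_mkcond /=; apply: eq_bigr => x _; case: (x \in Vs j).
    rewrite -size_filter; apply/perm_size; apply: uniq_perm => //.
      exact: filter_uniq.
    move=> x; rewrite mem_filter; apply/idP/andP => [xi|[]//]; split => //.
    by apply/cover; exists j.
  rewrite (eq_bigr _ (fun j _ => e1 j)) exchange_big /= -szV -sum1_size.
  rewrite big_seq [X in _ = X]big_seq; apply: eq_bigr => x xV.
  move/cover: xV => [i xi]; rewrite (bigD1 i) //= xi big1 // => j ji.
  by rewrite (negPf (disj i j _ x xi)) // eq_sym.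
have tP : forall j, size (Vs j) = q + (size (Vs j) - q) /\ size (Vs j) - q <= 1.
  move=> j; have hr' := ltn_pmod n m0.
  have dm : (n + m.-1) %/ m = q + (n %% m + m.-1) %/ m.
    by rewrite {1}(divn_eq n m) -addnA divnMDl.
  have : (n %% m + m.-1) %/ m < 2 by rewrite ltn_divLR //; lia.
  case: (bal j) => ->; first by rewrite subnn addn0.
  rewrite -/m dm; move: ((n %% m + m.-1) %/ m) => d hd; lia.
have tsum : \sum_(j < m) (size (Vs j) - q) = r.
  move: sizesum; rewrite (eq_bigr _ (fun j _ => proj1 (tP j))) big_split /=.
  rewrite big_const_ord iter_addn_0 hr => e.
  have := divn_eq n m; rewrite -/q; move: e; move: (\sum_(j < m) _) (n %% m) (q * m) => a b c; lia.
have triN : tri = m * 'C(q, 2) + q * r.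
  rewrite /tri (eq_bigr _ (fun j _ => pairs j)).
  rewrite (eq_bigr (fun j => 'C(q, 2) + (size (Vs j) - q) * q)); last first.
    move=> j _; case: (tP j) => E le; move: le E.
    move: (size (Vs j) - q) => t le ->.
    case: t le => [|[|t]] // _; first by rewrite addn0; lia.
    rewrite addn1 binS bin1; lia.
  rewrite big_split /= big_const_ord iter_addn_0 -big_distrl /= tsum; lia.
have Qn : forall x : nat, (x%:Q = x%:R :> rat)%R by [].
have F5 : ((tri%:Q) = ((n%:Q - r%:Q) * (n%:Q + r%:Q - k%:Q + 1)) / (2 * k%:Q - 2))%R.
  have hn : n = q * m + r by rewrite hr /q; exact: divn_eq.
  have mQ : (m%:R != 0 :> rat)%R by rewrite pnatr_eq0 -lt0n.
  rewrite !Qn triN km hn; move: (bin2_dbl q).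
  move: ('C(q, 2)) => c.
  have [q0 ->] : exists q0, q = q0 by exists q.
  case: q0 => [|q'] h2.
    have -> : c = 0 by lia.
    rewrite !mul0n muln0 !add0n.
    rewrite GRing.subrr GRing.mul0r GRing.mul0r //.
  have := congr1 (fun x : nat => (x%:R : rat)) h2.
  rewrite /= !natrM -[(q'.+1%:R)%R]natr1 => h2'.
  have hc : (c%:R = (q'%:R + 1%:R) * q'%:R / 2 :> rat)%R.
    by rewrite -h2'; field.
  rewrite !natrD !natrM hc -[(m.+1%:R)%R]natr1.
  field.
  have -> : (2 * (m%:R + 1) - 2 = 2 * m%:R :> rat)%R by ring.
  by rewrite mulf_neq0.
split.
  move=> HQ.
  have HS : S_P P V = tri.
    apply/eqP; rewrite -(eqr_nat rat); apply/eqP.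
    by rewrite -!Qn HQ F5.
  move=> j v w vj wj vw.
  case: (pickP (fun msk => inst msk && relb (mask msk V) j v w)) => [msk /andP[im rm]|none]; last first.
    exfalso.
    have : R < tri.
      apply: (@ltn_sum_seq _ _ _ _ j); [exact: index_enum_uniq | exact: mem_index_enum | | ].
        move=> i _; apply: leq_sum => v' _; apply: leq_sum => w' _; exact: F4.
      apply: (@ltn_sum_seq _ _ _ _ v); [exact: uVs | exact: vj | | ].
        move=> v' _; apply: leq_sum => w' _; exact: F4.
      apply: (@ltn_sum_seq _ _ _ _ w); [exact: uVs | exact: wj | | ].
        move=> w' _; exact: F4.
      by rewrite vw /term big1 // => msk _; rewrite none.
    by rewrite -HS ltnNge SleR.
  exists (mask msk V).
  move/and3P: rm => [_ /eqP pv /eqP pw].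
  split; first by split => //; split.
  split; first by move=> x /mem_mask.
  move=> i ij [x [y [px [py [xi yi]]]]].
  have ss : sorted <%O (mask msk V) by case/andP: im.
  have ei : echb (mask msk V) i.
    by rewrite /echb px py xi yi (onth_lt _ _ _ _ ss px py).
  have ej : echb (mask msk V) j.
    by rewrite /echb pv pw vj wj vw.
  have : S_P P V < R.
    rewrite F1; apply: (@ltn_sum_seq _ _ _ _ msk); [exact: index_enum_uniq | exact: mem_index_enum | | ].
      by move=> ? _; exact: Fins.
    rewrite F2 im mul1n (bigD1 j) //= ej (bigD1 i) //= ei.
    by move: im; rewrite /inst => ->.
  by move=> lt; move: (leq_trans lt Rle); rewrite HS ltnn.
move=> H.
have HS : S_P P V = tri.
  apply/eqP; rewrite eqn_leq (leq_trans SleR Rle) /=.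
  apply: (@leq_trans R).
    apply: leq_sum => j _; rewrite big_seq [X in _ <= X]big_seq.
    apply: leq_sum => v vj; rewrite big_seq [X in _ <= X]big_seq.
    apply: leq_sum => w wj.
    case vw: (v < w)%O => //.
    have [s [[isI [ps qs]] [sub _]]] := H j v w vj wj vw.
    have [msk E] := subset_mask _ _ (proj1 (andP isI)) sV sub.
    have hm : inst msk && relb (mask msk V) j v w.
      by rewrite /inst -E isI /relb vw ps qs !eqxx.
    by rewrite /term (bigD1 msk) //= hm.
  rewrite F1; apply: leq_sum => msk _; rewrite F2.
  case im: (inst msk) => //; rewrite mul1n.
  have -> : instance P (mask msk V) = true := im.
  apply: (@sum_le1 _ (echb (mask msk V))) => a b ea eb.
  apply/eqP; apply: contraT => ab.
  move: ea; rewrite /echb.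
  case Ex: (onth (mask msk V) a) => [x|] //; case Ey: (onth (mask msk V) a.+1) => [y|] //.
  move=> /and3P[xy xa ya].
  have [s' [rs' [_ ne]]] := H a x y xa ya xy.
  have E : mask msk V = s'.
    by apply: (amo a x y (ltn_ord a) xy) => //; split => //; split.
  case: (ne b); first by rewrite eq_sym.
  rewrite -E; move: eb; rewrite /echb.
  case Ex': (onth (mask msk V) b) => [x'|] //; case Ey': (onth (mask msk V) b.+1) => [y'|] //.
  move=> /and3P[_ xb yb]; by exists x', y'.
by rewrite HS.
Qed.
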